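(* If $C$ is a ternary near-extremal self-dual code of length $36$ and $\alpha$ denotes the number of codewords of weight $9$ in $C$, then $\alpha=8\beta$ for some integer $\beta$ with $1\le\beta\le 111$.
   Context: A ternary code of length $n$ is a linear subspace of $\mathbb{F}_3^n$; it is self-dual if it equals its dual with respect to the standard inner product $\sum_k x_k y_k$. The weight of a vector is the number of nonzero coordinates. A ternary self-dual code of length $36$ is near-extremal if its minimum nonzero weight is $9$. *)

(* Defs.v *)
From mathcomp Require Import all_boot all_order all_algebra.
Set Implicit Arguments. Unset Strict Implicit. Unset Printing Implicit Defensive.
Import GRing.Theory.
Local Open Scope ring_scope.

Definition ternary_code (n : nat) := {vspace 'rV['F_3]_n}.

Definition tdot (n : nat) (x y : 'rV['F_3]_n) : 'F_3 := \sum_(k < n) x ord0 k * y ord0 k.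

Definition wt (n : nat) (x : 'rV['F_3]_n) : nat := #|[set k : 'I_n | x ord0 k != 0]|.

Definition self_dual (n : nat) (C : ternary_code n) : Prop :=
  forall y : 'rV['F_3]_n, (y \in C) <-> (forall x, x \in C -> tdot x y = 0).

Definition min_weight_eq (n : nat) (C : ternary_code n) (d : nat) : Prop :=
  (exists2 x, x \in C & (x != 0) && (wt x == d)) /\
  (forall x, x \in C -> x != 0 -> (d <= wt x)%N).

Definition near_extremal36 (C : ternary_code 36) : Prop :=
  self_dual C /\ min_weight_eq C 9.

Definition num_weight (n : nat) (C : ternary_code n) (w : nat) : nat :=
  #|[set x : 'rV['F_3]_n | (x \in C) && (wt x == w)]|%N.

(* Main.v *)
Require Import Defs.
From Stdlib Require Import ZArith Lia.
From mathcomp Require Import all_boot all_order all_algebra all_fingroup.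
From mathcomp Require Import mxabelem zify.

Module ZA.
Local Open Scope Z_scope.
Fixpoint zfact (n : nat) : Z := match n with O => 1 | S k => Z.of_nat (S k) * zfact k end.
Definition zbin (n k : nat) : Z := if Nat.leb k n then zfact n / (zfact k * zfact (Nat.sub n k)) else 0.

Lemma Zof_mul (a b : nat) : Z.of_nat (a * b)%nat = Z.of_nat a * Z.of_nat b.
Proof. exact: Nat2Z.inj_mul. Qed.

Lemma zfactE n : Z.of_nat n`! = zfact n.
Proof. elim: n => [|n IH] //=; by rewrite factS Zof_mul IH. Qed.

Lemma zfact_pos n : 0 < zfact n.
Proof. rewrite -zfactE; have := fact_gt0 n; lia. Qed.

Lemma Zof_bin n k : Z.of_nat 'C(n, k) = zbin n k.
Proof.
rewrite /zbin; case: (leqP k n) => h.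
- have -> : Nat.leb k n = true by apply/Nat.leb_le/leP.
  have e := congr1 Z.of_nat (bin_fact h).
  rewrite Zof_mul Zof_mul !zfactE in e.
  have -> : zfact n = Z.of_nat 'C(n, k) * (zfact k * zfact (Nat.sub n k)) by rewrite -e.
  rewrite Z.div_mul //; have := zfact_pos k; have := zfact_pos (Nat.sub n k); lia.
- have -> : Nat.leb k n = false by apply/Nat.leb_gt/ltP.
  by rewrite bin_small.
Qed.


Lemma Zof_add (a b : nat) : Z.of_nat (a + b)%nat = Z.of_nat a + Z.of_nat b.
Proof. exact: Nat2Z.inj_add. Qed.

Lemma Zof_exp3 (n : nat) : Z.of_nat (3 ^ n)%nat = 3 ^ Z.of_nat n.
Proof.
elim: n => [|n IH] //.
rewrite expnS Zof_mul IH.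
have -> : Z.of_nat n.+1 = Z.succ (Z.of_nat n) by lia.
rewrite Z.pow_succ_r //; lia.
Qed.

Ltac evalZ := repeat match goal with
 | H : context [zbin ?n ?k] |- _ => let v := eval vm_compute in (zbin n k) in change (zbin n k) with v in H
 | H : context [Z.of_nat (expn 3 ?k)] |- _ => let v := eval vm_compute in (Z.of_nat (expn 3 k)) in change (Z.of_nat (expn 3 k)) with v in H
 | H : context [Z.pow 3 18] |- _ => let v := eval vm_compute in (Z.pow 3 18) in change (Z.pow 3 18) with v in H
 end.
Lemma arithZ (A0 A9 A12 A15 A18 A21 A24 A27 A30 A33 A36 B0 B9 B12 B15 B18 B21 B24 B27 B30 B33 B36 Z0 Z9 Z12 Z15 Z18 Z21 Z24 Z27 Z30 Z33 Z36 : Z) :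
  (A0 * 1 + A9 * 1 + A12 * 1 + A15 * 1 + A18 * 1 + A21 * 1 + A24 * 1 + A27 * 1 + A30 * 1 + A33 * 1 + A36 * 1) * 1 = 387420489 * 1 ->
  (A0 * 36 + A9 * 27 + A12 * 24 + A15 * 21 + A18 * 18 + A21 * 15 + A24 * 12 + A27 * 9 + A30 * 6 + A33 * 3 + A36 * 0) * 3 = 387420489 * 36 ->
  (A0 * 630 + A9 * 351 + A12 * 276 + A15 * 210 + A18 * 153 + A21 * 105 + A24 * 66 + A27 * 36 + A30 * 15 + A33 * 3 + A36 * 0) * 9 = 387420489 * 630 ->
  (A0 * 7140 + A9 * 2925 + A12 * 2024 + A15 * 1330 + A18 * 816 + A21 * 455 + A24 * 220 + A27 * 84 + A30 * 20 + A33 * 1 + A36 * 0) * 27 = 387420489 * 7140 ->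
  (A0 * 58905 + A9 * 17550 + A12 * 10626 + A15 * 5985 + A18 * 3060 + A21 * 1365 + A24 * 495 + A27 * 126 + A30 * 15 + A33 * 0 + A36 * 0) * 81 = 387420489 * 58905 ->
  (A0 * 376992 + A9 * 80730 + A12 * 42504 + A15 * 20349 + A18 * 8568 + A21 * 3003 + A24 * 792 + A27 * 126 + A30 * 6 + A33 * 0 + A36 * 0) * 243 = 387420489 * 376992 ->
  (A0 * 1947792 + A9 * 296010 + A12 * 134596 + A15 * 54264 + A18 * 18564 + A21 * 5005 + A24 * 924 + A27 * 84 + A30 * 1 + A33 * 0 + A36 * 0) * 729 = 387420489 * 1947792 ->
  (A0 * 8347680 + A9 * 888030 + A12 * 346104 + A15 * 116280 + A18 * 31824 + A21 * 6435 + A24 * 792 + A27 * 36 + A30 * 0 + A33 * 0 + A36 * 0) * 2187 = 387420489 * 8347680 ->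
  (A0 * 30260340 + A9 * 2220075 + A12 * 735471 + A15 * 203490 + A18 * 43758 + A21 * 6435 + A24 * 495 + A27 * 9 + A30 * 0 + A33 * 0 + A36 * 0) * 6561 = 387420489 * 30260340 ->
  ((B0 * 36 + B9 * 27 + B12 * 24 + B15 * 21 + B18 * 18 + B21 * 15 + B24 * 12 + B27 * 9 + B30 * 6 + B33 * 3 + B36 * 0) + (Z0 * 35 + Z9 * 26 + Z12 * 23 + Z15 * 20 + Z18 * 17 + Z21 * 14 + Z24 * 11 + Z27 * 8 + Z30 * 5 + Z33 * 2 + Z36 * 0)) * 3 = 387420489 * 35 ->
  ((B0 * 630 + B9 * 351 + B12 * 276 + B15 * 210 + B18 * 153 + B21 * 105 + B24 * 66 + B27 * 36 + B30 * 15 + B33 * 3 + B36 * 0) + (Z0 * 595 + Z9 * 325 + Z12 * 253 + Z15 * 190 + Z18 * 136 + Z21 * 91 + Z24 * 55 + Z27 * 28 + Z30 * 10 + Z33 * 1 + Z36 * 0)) * 9 = 387420489 * 595 ->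
  ((B0 * 7140 + B9 * 2925 + B12 * 2024 + B15 * 1330 + B18 * 816 + B21 * 455 + B24 * 220 + B27 * 84 + B30 * 20 + B33 * 1 + B36 * 0) + (Z0 * 6545 + Z9 * 2600 + Z12 * 1771 + Z15 * 1140 + Z18 * 680 + Z21 * 364 + Z24 * 165 + Z27 * 56 + Z30 * 10 + Z33 * 0 + Z36 * 0)) * 27 = 387420489 * 6545 ->
  ((B0 * 58905 + B9 * 17550 + B12 * 10626 + B15 * 5985 + B18 * 3060 + B21 * 1365 + B24 * 495 + B27 * 126 + B30 * 15 + B33 * 0 + B36 * 0) + (Z0 * 52360 + Z9 * 14950 + Z12 * 8855 + Z15 * 4845 + Z18 * 2380 + Z21 * 1001 + Z24 * 330 + Z27 * 70 + Z30 * 5 + Z33 * 0 + Z36 * 0)) * 81 = 387420489 * 52360 ->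
  ((B0 * 376992 + B9 * 80730 + B12 * 42504 + B15 * 20349 + B18 * 8568 + B21 * 3003 + B24 * 792 + B27 * 126 + B30 * 6 + B33 * 0 + B36 * 0) + (Z0 * 324632 + Z9 * 65780 + Z12 * 33649 + Z15 * 15504 + Z18 * 6188 + Z21 * 2002 + Z24 * 462 + Z27 * 56 + Z30 * 1 + Z33 * 0 + Z36 * 0)) * 243 = 387420489 * 324632 ->
  ((B0 * 1947792 + B9 * 296010 + B12 * 134596 + B15 * 54264 + B18 * 18564 + B21 * 5005 + B24 * 924 + B27 * 84 + B30 * 1 + B33 * 0 + B36 * 0) + (Z0 * 1623160 + Z9 * 230230 + Z12 * 100947 + Z15 * 38760 + Z18 * 12376 + Z21 * 3003 + Z24 * 462 + Z27 * 28 + Z30 * 0 + Z33 * 0 + Z36 * 0)) * 729 = 387420489 * 1623160 ->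
  ((B0 * 8347680 + B9 * 888030 + B12 * 346104 + B15 * 116280 + B18 * 31824 + B21 * 6435 + B24 * 792 + B27 * 36 + B30 * 0 + B33 * 0 + B36 * 0) + (Z0 * 6724520 + Z9 * 657800 + Z12 * 245157 + Z15 * 77520 + Z18 * 19448 + Z21 * 3432 + Z24 * 330 + Z27 * 8 + Z30 * 0 + Z33 * 0 + Z36 * 0)) * 2187 = 387420489 * 6724520 ->
  ((B0 * 30260340 + B9 * 2220075 + B12 * 735471 + B15 * 203490 + B18 * 43758 + B21 * 6435 + B24 * 495 + B27 * 9 + B30 * 0 + B33 * 0 + B36 * 0) + (Z0 * 23535820 + Z9 * 1562275 + Z12 * 490314 + Z15 * 125970 + Z18 * 24310 + Z21 * 3003 + Z24 * 165 + Z27 * 1 + Z30 * 0 + Z33 * 0 + Z36 * 0)) * 6561 = 387420489 * 23535820 ->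
  ((B0 * 94143280 + B9 * 4686825 + B12 * 1307504 + B15 * 293930 + B18 * 48620 + B21 * 5005 + B24 * 220 + B27 * 1 + B30 * 0 + B33 * 0 + B36 * 0) + (Z0 * 70607460 + Z9 * 3124550 + Z12 * 817190 + Z15 * 167960 + Z18 * 24310 + Z21 * 2002 + Z24 * 55 + Z27 * 0 + Z30 * 0 + Z33 * 0 + Z36 * 0)) * 19683 = 387420489 * (70607460 + Z9) ->
  A9 = B9 + Z9 ->
  A12 = B12 + Z12 ->
  A15 = B15 + Z15 ->
  A18 = B18 + Z18 ->
  A21 = B21 + Z21 ->
  A24 = B24 + Z24 ->
  A27 = B27 + Z27 ->
  A30 = B30 + Z30 ->
  A33 = B33 + Z33 ->
  A36 = B36 + Z36 ->
  A0 = 1 ->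
  B0 = 0 ->
  Z0 = 1 ->
  A9 = 4 * B9 /\ A9 + A36 = 888.
Proof.
intros G0 G1 G2 G3 G4 G5 G6 G7 G8 L1 L2 L3 L4 L5 L6 L7 L8 L9 S9 S12 S15 S18 S21 S24 S27 S30 S33 S36 A0e B0e Z0e.
apply Zeq_minus in G0.
apply Zeq_minus in G1.
apply Zeq_minus in G2.
apply Zeq_minus in G3.
apply Zeq_minus in G4.
apply Zeq_minus in G5.
apply Zeq_minus in G6.
apply Zeq_minus in G7.
apply Zeq_minus in G8.
apply Zeq_minus in L1.
apply Zeq_minus in L2.
apply Zeq_minus in L3.
apply Zeq_minus in L4.
apply Zeq_minus in L5.
apply Zeq_minus in L6.
apply Zeq_minus in L7.
apply Zeq_minus in L8.
apply Zeq_minus in L9.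
apply Zeq_minus in S9.
apply Zeq_minus in S12.
apply Zeq_minus in S15.
apply Zeq_minus in S18.
apply Zeq_minus in S21.
apply Zeq_minus in S24.
apply Zeq_minus in S27.
apply Zeq_minus in S30.
apply Zeq_minus in S33.
apply Zeq_minus in S36.
apply Zeq_minus in A0e.
apply Zeq_minus in B0e.
apply Zeq_minus in Z0e.
assert (E1 : 129140163 * (A9 - 4 * B9) = (13935240) * (((A0 * 36 + A9 * 27 + A12 * 24 + A15 * 21 + A18 * 18 + A21 * 15 + A24 * 12 + A27 * 9 + A30 * 6 + A33 * 3 + A36 * 0) * 3) - (387420489 * 36)) + (-3037419) * (((A0 * 630 + A9 * 351 + A12 * 276 + A15 * 210 + A18 * 153 + A21 * 105 + A24 * 66 + A27 * 36 + A30 * 15 + A33 * 3 + A36 * 0) * 9) - (387420489 * 630)) + (574398) * (((A0 * 7140 + A9 * 2925 + A12 * 2024 + A15 * 1330 + A18 * 816 + A21 * 455 + A24 * 220 + A27 * 84 + A30 * 20 + A33 * 1 + A36 * 0) * 27) - (387420489 * 7140)) + (-92070) * (((A0 * 58905 + A9 * 17550 + A12 * 10626 + A15 * 5985 + A18 * 3060 + A21 * 1365 + A24 * 495 + A27 * 126 + A30 * 15 + A33 * 0 + A36 * 0) * 81) - (387420489 * 58905)) + (12060) * (((A0 * 376992 + A9 * 80730 + A12 * 42504 + A15 * 20349 + A18 * 8568 + A21 * 3003 + A24 * 792 + A27 * 126 + A30 * 6 + A33 * 0 + A36 * 0) * 243) - (387420489 * 376992)) + (-1215) * (((A0 * 1947792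 + A9 * 296010 + A12 * 134596 + A15 * 54264 + A18 * 18564 + A21 * 5005 + A24 * 924 + A27 * 84 + A30 * 1 + A33 * 0 + A36 * 0) * 729) - (387420489 * 1947792)) + (84) * (((A0 * 8347680 + A9 * 888030 + A12 * 346104 + A15 * 116280 + A18 * 31824 + A21 * 6435 + A24 * 792 + A27 * 36 + A30 * 0 + A33 * 0 + A36 * 0) * 2187) - (387420489 * 8347680)) + (-3) * (((A0 * 30260340 + A9 * 2220075 + A12 * 735471 + A15 * 203490 + A18 * 43758 + A21 * 6435 + A24 * 495 + A27 * 9 + A30 * 0 + A33 * 0 + A36 * 0) * 6561) - (387420489 * 30260340)) + (-15677145) * ((((B0 * 36 + B9 * 27 + B12 * 24 + B15 * 21 + B18 * 18 + B21 * 15 + B24 * 12 + B27 * 9 + B30 * 6 + B33 * 3 + B36 * 0) + (Z0 * 35 + Z9 * 26 + Z12 * 23 + Z15 * 20 + Z18 * 17 + Z21 * 14 + Z24 * 11 + Z27 * 8 + Z30 * 5 + Z33 * 2 + Z36 * 0)) * 3) - (387420489 * 35)) + (3905253) * ((((B0 * 630 + B9 * 351 + B12 * 276 + B15 * 210 + B18 * 153 + B21 * 105 + B24 * 66 + B27 * 36 + B30 * 15 + B33 * 3 + B36 * 0) + (Z0 * 595 + Z9 * 325 + Z12 * 253 + Z15 * 190 + Z18 * 136 + Z21 * 91 + Z24 * 55 + Z27 * 28 + Z30 * 10 + Z33 * 1 + Z36 * 0)) * 9) - (387420489 * 595)) + (-861597) * ((((B0 * 7140 + B9 * 2925 + B12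 * 2024 + B15 * 1330 + B18 * 816 + B21 * 455 + B24 * 220 + B27 * 84 + B30 * 20 + B33 * 1 + B36 * 0) + (Z0 * 6545 + Z9 * 2600 + Z12 * 1771 + Z15 * 1140 + Z18 * 680 + Z21 * 364 + Z24 * 165 + Z27 * 56 + Z30 * 10 + Z33 * 0 + Z36 * 0)) * 27) - (387420489 * 6545)) + (165726) * ((((B0 * 58905 + B9 * 17550 + B12 * 10626 + B15 * 5985 + B18 * 3060 + B21 * 1365 + B24 * 495 + B27 * 126 + B30 * 15 + B33 * 0 + B36 * 0) + (Z0 * 52360 + Z9 * 14950 + Z12 * 8855 + Z15 * 4845 + Z18 * 2380 + Z21 * 1001 + Z24 * 330 + Z27 * 70 + Z30 * 5 + Z33 * 0 + Z36 * 0)) * 81) - (387420489 * 52360)) + (-27135) * ((((B0 * 376992 + B9 * 80730 + B12 * 42504 + B15 * 20349 + B18 * 8568 + B21 * 3003 + B24 * 792 + B27 * 126 + B30 * 6 + B33 * 0 + B36 * 0) + (Z0 * 324632 + Z9 * 65780 + Z12 * 33649 + Z15 * 15504 + Z18 * 6188 + Z21 * 2002 + Z24 * 462 + Z27 * 56 + Z30 * 1 + Z33 * 0 + Z36 * 0)) * 243) - (387420489 * 324632)) + (3645) * ((((B0 * 1947792 + B9 * 296010 + B12 * 134596 + B15 * 54264 + B18 * 18564 + B21 * 5005 + B24 * 924 + B27 * 84 + B30 * 1 + B33 * 0 + B36 * 0) + (Z0 * 1623160 + Z9 * 230230 + Z12 * 100947 + Z15 * 38760 + Z18 * 12376 + Z21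 * 3003 + Z24 * 462 + Z27 * 28 + Z30 * 0 + Z33 * 0 + Z36 * 0)) * 729) - (387420489 * 1623160)) + (-378) * ((((B0 * 8347680 + B9 * 888030 + B12 * 346104 + B15 * 116280 + B18 * 31824 + B21 * 6435 + B24 * 792 + B27 * 36 + B30 * 0 + B33 * 0 + B36 * 0) + (Z0 * 6724520 + Z9 * 657800 + Z12 * 245157 + Z15 * 77520 + Z18 * 19448 + Z21 * 3432 + Z24 * 330 + Z27 * 8 + Z30 * 0 + Z33 * 0 + Z36 * 0)) * 2187) - (387420489 * 6724520)) + (27) * ((((B0 * 30260340 + B9 * 2220075 + B12 * 735471 + B15 * 203490 + B18 * 43758 + B21 * 6435 + B24 * 495 + B27 * 9 + B30 * 0 + B33 * 0 + B36 * 0) + (Z0 * 23535820 + Z9 * 1562275 + Z12 * 490314 + Z15 * 125970 + Z18 * 24310 + Z21 * 3003 + Z24 * 165 + Z27 * 1 + Z30 * 0 + Z33 * 0 + Z36 * 0)) * 6561) - (387420489 * 23535820)) + (-1) * ((((B0 * 94143280 + B9 * 4686825 + B12 * 1307504 + B15 * 293930 + B18 * 48620 + B21 * 5005 + B24 * 220 + B27 * 1 + B30 * 0 + B33 * 0 + B36 * 0) + (Z0 * 70607460 + Z9 * 3124550 + Z12 * 817190 + Z15 * 167960 + Z18 * 24310 + Z21 * 2002 + Z24 * 55 + Z27 * 0 + Z30 * 0 + Z33 * 0 + Z36 * 0)) * 19683) - (387420489 * (70607460 + Z9))) + (274833729) * ((A9) - (B9 + Z9)) + (-53671167) * ((A12)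 - (B12 + Z12)) + (-56796390) * ((A15) - (B15 + Z15)) + (-56103111) * ((A18) - (B18 + Z18)) + (-56413665) * ((A21) - (B21 + Z21)) + (-56173095) * ((A24) - (B24 + Z24)) + (-56483649) * ((A27) - (B27 + Z27)) + (-55790370) * ((A30) - (B30 + Z30)) + (-58915593) * ((A33) - (B33 + Z33)) + (26779771260) * ((A0) - (1)) + (58452736320) * ((B0) - (0)) + (37144609425) * ((Z0) - (1))) by ring.
assert (E2 : 43046721 * (A9 + A36 - 888) = (43046721) * (((A0 * 1 + A9 * 1 + A12 * 1 + A15 * 1 + A18 * 1 + A21 * 1 + A24 * 1 + A27 * 1 + A30 * 1 + A33 * 1 + A36 * 1) * 1) - (387420489 * 1)) + (-9123192) * (((A0 * 36 + A9 * 27 + A12 * 24 + A15 * 21 + A18 * 18 + A21 * 15 + A24 * 12 + A27 * 9 + A30 * 6 + A33 * 3 + A36 * 0) * 3) - (387420489 * 36)) + (1739313) * (((A0 * 630 + A9 * 351 + A12 * 276 + A15 * 210 + A18 * 153 + A21 * 105 + A24 * 66 + A27 * 36 + A30 * 15 + A33 * 3 + A36 * 0) * 9) - (387420489 * 630)) + (-292572) * (((A0 * 7140 + A9 * 2925 + A12 * 2024 + A15 * 1330 + A18 * 816 + A21 * 455 + A24 * 220 + A27 * 84 + A30 * 20 + A33 * 1 + A36 * 0) * 27) - (387420489 * 7140)) + (42282) * (((A0 * 58905 + A9 * 17550 + A12 * 10626 + A15 * 5985 + A18 * 3060 + A21 * 1365 + A24 * 495 + A27 * 126 + A30 * 15 +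 A33 * 0 + A36 * 0) * 81) - (387420489 * 58905)) + (-5049) * (((A0 * 376992 + A9 * 80730 + A12 * 42504 + A15 * 20349 + A18 * 8568 + A21 * 3003 + A24 * 792 + A27 * 126 + A30 * 6 + A33 * 0 + A36 * 0) * 243) - (387420489 * 376992)) + (468) * (((A0 * 1947792 + A9 * 296010 + A12 * 134596 + A15 * 54264 + A18 * 18564 + A21 * 5005 + A24 * 924 + A27 * 84 + A30 * 1 + A33 * 0 + A36 * 0) * 729) - (387420489 * 1947792)) + (-30) * (((A0 * 8347680 + A9 * 888030 + A12 * 346104 + A15 * 116280 + A18 * 31824 + A21 * 6435 + A24 * 792 + A27 * 36 + A30 * 0 + A33 * 0 + A36 * 0) * 2187) - (387420489 * 8347680)) + (1) * (((A0 * 30260340 + A9 * 2220075 + A12 * 735471 + A15 * 203490 + A18 * 43758 + A21 * 6435 + A24 * 495 + A27 * 9 + A30 * 0 + A33 * 0 + A36 * 0) * 6561) - (387420489 * 30260340)) + (-7102708965) * ((A0) - (1))) by ring.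
try rewrite G0 in E1; try rewrite G0 in E2.
try rewrite G1 in E1; try rewrite G1 in E2.
try rewrite G2 in E1; try rewrite G2 in E2.
try rewrite G3 in E1; try rewrite G3 in E2.
try rewrite G4 in E1; try rewrite G4 in E2.
try rewrite G5 in E1; try rewrite G5 in E2.
try rewrite G6 in E1; try rewrite G6 in E2.
try rewrite G7 in E1; try rewrite G7 in E2.
try rewrite G8 in E1; try rewrite G8 in E2.
try rewrite L1 in E1; try rewrite L1 in E2.
try rewrite L2 in E1; try rewrite L2 in E2.
try rewrite L3 in E1; try rewrite L3 in E2.
try rewrite L4 in E1; try rewrite L4 in E2.
try rewrite L5 in E1; try rewrite L5 in E2.
try rewrite L6 in E1; try rewrite L6 in E2.
try rewrite L7 in E1; try rewrite L7 in E2.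
try rewrite L8 in E1; try rewrite L8 in E2.
try rewrite L9 in E1; try rewrite L9 in E2.
try rewrite S9 in E1; try rewrite S9 in E2.
try rewrite S12 in E1; try rewrite S12 in E2.
try rewrite S15 in E1; try rewrite S15 in E2.
try rewrite S18 in E1; try rewrite S18 in E2.
try rewrite S21 in E1; try rewrite S21 in E2.
try rewrite S24 in E1; try rewrite S24 in E2.
try rewrite S27 in E1; try rewrite S27 in E2.
try rewrite S30 in E1; try rewrite S30 in E2.
try rewrite S33 in E1; try rewrite S33 in E2.
try rewrite S36 in E1; try rewrite S36 in E2.
try rewrite A0e in E1; try rewrite A0e in E2.
try rewrite B0e in E1; try rewrite B0e in E2.
try rewrite Z0e in E1; try rewrite Z0e in E2.
clear - E1 E2. split; lia.
Qed.

Lemma convG (m k N x0 x1 x2 x3 x4 x5 x6 x7 x8 x9 x10 n0 n1 n2 n3 n4 n5 n6 n7 n8 n9 n10 : nat) :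
  ((x0 * 'C(n0, k) + x1 * 'C(n1, k) + x2 * 'C(n2, k) + x3 * 'C(n3, k) + x4 * 'C(n4, k) + x5 * 'C(n5, k) + x6 * 'C(n6, k) + x7 * 'C(n7, k) + x8 * 'C(n8, k) + x9 * 'C(n9, k) + x10 * 'C(n10, k)) * 3 ^ k = 3 ^ m * 'C(N, k))%N -> m = 18%N ->
  (Z.of_nat x0 * zbin n0 k + Z.of_nat x1 * zbin n1 k + Z.of_nat x2 * zbin n2 k + Z.of_nat x3 * zbin n3 k + Z.of_nat x4 * zbin n4 k + Z.of_nat x5 * zbin n5 k + Z.of_nat x6 * zbin n6 k + Z.of_nat x7 * zbin n7 k + Z.of_nat x8 * zbin n8 k + Z.of_nat x9 * zbin n9 k + Z.of_nat x10 * zbin n10 k) * Z.of_nat (3 ^ k) = 3 ^ 18 * zbin N k.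
Proof. move=> H hm; have := congr1 Z.of_nat H; rewrite !(Zof_add, Zof_mul, Zof_bin) (Zof_exp3 m) hm; exact. Qed.

Lemma convL (m k N x0 x1 x2 x3 x4 x5 x6 x7 x8 x9 x10 n0 n1 n2 n3 n4 n5 n6 n7 n8 n9 n10 y0 y1 y2 y3 y4 y5 y6 y7 y8 y9 y10 p0 p1 p2 p3 p4 p5 p6 p7 p8 p9 p10 : nat) :
  ((((x0 * 'C(n0, k) + x1 * 'C(n1, k) + x2 * 'C(n2, k) + x3 * 'C(n3, k) + x4 * 'C(n4, k) + x5 * 'C(n5, k) + x6 * 'C(n6, k) + x7 * 'C(n7, k) + x8 * 'C(n8, k) + x9 * 'C(n9, k) + x10 * 'C(n10, k))) + ((y0 * 'C(p0, k) + y1 * 'C(p1, k) + y2 * 'C(p2, k) + y3 * 'C(p3, k) + y4 * 'C(p4, k) + y5 * 'C(p5, k) + y6 * 'C(p6, k) + y7 * 'C(p7, k) + y8 * 'C(p8, k) + y9 * 'C(p9, k) + y10 * 'C(p10, k)))) * 3 ^ k = 3 ^ m * 'C(N, k))%N -> m = 18%N ->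
  ((Z.of_nat x0 * zbin n0 k + Z.of_nat x1 * zbin n1 k + Z.of_nat x2 * zbin n2 k + Z.of_nat x3 * zbin n3 k + Z.of_nat x4 * zbin n4 k + Z.of_nat x5 * zbin n5 k + Z.of_nat x6 * zbin n6 k + Z.of_nat x7 * zbin n7 k + Z.of_nat x8 * zbin n8 k + Z.of_nat x9 * zbin n9 k + Z.of_nat x10 * zbin n10 k) + (Z.of_nat y0 * zbin p0 k + Z.of_nat y1 * zbin p1 k + Z.of_nat y2 * zbin p2 k + Z.of_nat y3 * zbin p3 k + Z.of_nat y4 * zbin p4 k + Z.of_nat y5 * zbin p5 k + Z.of_nat y6 * zbin p6 k + Z.of_nat y7 * zbin p7 k + Z.of_nat y8 * zbin p8 k + Z.of_nat y9 * zbin p9 k + Z.of_nat y10 * zbin p10 k)) * Z.of_nat (3 ^ k) = 3 ^ 18 * zbin N k.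
Proof. move=> H hm; have := congr1 Z.of_nat H; rewrite !(Zof_add, Zof_mul, Zof_bin) (Zof_exp3 m) hm; exact. Qed.

Lemma convL9 (m k N z x0 x1 x2 x3 x4 x5 x6 x7 x8 x9 x10 n0 n1 n2 n3 n4 n5 n6 n7 n8 n9 n10 y0 y1 y2 y3 y4 y5 y6 y7 y8 y9 y10 p0 p1 p2 p3 p4 p5 p6 p7 p8 p9 p10 : nat) :
  ((((x0 * 'C(n0, k) + x1 * 'C(n1, k) + x2 * 'C(n2, k) + x3 * 'C(n3, k) + x4 * 'C(n4, k) + x5 * 'C(n5, k) + x6 * 'C(n6, k) + x7 * 'C(n7, k) + x8 * 'C(n8, k) + x9 * 'C(n9, k) + x10 * 'C(n10, k))) + ((y0 * 'C(p0, k) + y1 * 'C(p1, k) + y2 * 'C(p2, k) + y3 * 'C(p3, k) + y4 * 'C(p4, k) + y5 * 'C(p5, k) + y6 * 'C(p6, k) + y7 * 'C(p7, k) + y8 * 'C(p8, k) + y9 * 'C(p9, k) + y10 * 'C(p10, k)))) * 3 ^ k = 3 ^ m * ('C(N, k) + z))%N -> m = 18%N ->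
  ((Z.of_nat x0 * zbin n0 k + Z.of_nat x1 * zbin n1 k + Z.of_nat x2 * zbin n2 k + Z.of_nat x3 * zbin n3 k + Z.of_nat x4 * zbin n4 k + Z.of_nat x5 * zbin n5 k + Z.of_nat x6 * zbin n6 k + Z.of_nat x7 * zbin n7 k + Z.of_nat x8 * zbin n8 k + Z.of_nat x9 * zbin n9 k + Z.of_nat x10 * zbin n10 k) + (Z.of_nat y0 * zbin p0 k + Z.of_nat y1 * zbin p1 k + Z.of_nat y2 * zbin p2 k + Z.of_nat y3 * zbin p3 k + Z.of_nat y4 * zbin p4 k + Z.of_nat y5 * zbin p5 k + Z.of_nat y6 * zbin p6 k + Z.of_nat y7 * zbin p7 k + Z.of_nat y8 * zbin p8 k + Z.of_nat y9 * zbin p9 k + Z.of_nat y10 * zbin p10 k)) * Z.of_nat (3 ^ k) = 3 ^ 18 * (zbin N k + Z.of_nat z).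
Proof. move=> H hm; have := congr1 Z.of_nat H; rewrite !(Zof_add, Zof_mul, Zof_bin) (Zof_exp3 m) hm; exact. Qed.

Lemma arith_nat (m a0 a9 a12 a15 a18 a21 a24 a27 a30 a33 a36 b0 b9 b12 b15 b18 b21 b24 b27 b30 b33 b36 z0 z9 z12 z15 z18 z21 z24 z27 z30 z33 z36 : nat) : m = 18%N ->
  ((a0 * 'C(36 - 0, 0) + a9 * 'C(36 - 9, 0) + a12 * 'C(36 - 12, 0) + a15 * 'C(36 - 15, 0) + a18 * 'C(36 - 18, 0) + a21 * 'C(36 - 21, 0) + a24 * 'C(36 - 24, 0) + a27 * 'C(36 - 27, 0) + a30 * 'C(36 - 30, 0) + a33 * 'C(36 - 33, 0) + a36 * 'C(36 - 36, 0)) * 3 ^ 0 = 3 ^ m * 'C(36, 0))%N ->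
  ((a0 * 'C(36 - 0, 1) + a9 * 'C(36 - 9, 1) + a12 * 'C(36 - 12, 1) + a15 * 'C(36 - 15, 1) + a18 * 'C(36 - 18, 1) + a21 * 'C(36 - 21, 1) + a24 * 'C(36 - 24, 1) + a27 * 'C(36 - 27, 1) + a30 * 'C(36 - 30, 1) + a33 * 'C(36 - 33, 1) + a36 * 'C(36 - 36, 1)) * 3 ^ 1 = 3 ^ m * 'C(36, 1))%N ->
  ((a0 * 'C(36 - 0, 2) + a9 * 'C(36 - 9, 2) + a12 * 'C(36 - 12, 2) + a15 * 'C(36 - 15, 2) + a18 * 'C(36 - 18, 2) + a21 * 'C(36 - 21, 2) + a24 * 'C(36 - 24, 2) + a27 * 'C(36 - 27, 2) + a30 * 'C(36 - 30, 2) + a33 * 'C(36 - 33, 2) + a36 * 'C(36 - 36, 2)) * 3 ^ 2 = 3 ^ m * 'C(36, 2))%N ->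
  ((a0 * 'C(36 - 0, 3) + a9 * 'C(36 - 9, 3) + a12 * 'C(36 - 12, 3) + a15 * 'C(36 - 15, 3) + a18 * 'C(36 - 18, 3) + a21 * 'C(36 - 21, 3) + a24 * 'C(36 - 24, 3) + a27 * 'C(36 - 27, 3) + a30 * 'C(36 - 30, 3) + a33 * 'C(36 - 33, 3) + a36 * 'C(36 - 36, 3)) * 3 ^ 3 = 3 ^ m * 'C(36, 3))%N ->
  ((a0 * 'C(36 - 0, 4) + a9 * 'C(36 - 9, 4) + a12 * 'C(36 - 12, 4) + a15 * 'C(36 - 15, 4) + a18 * 'C(36 - 18, 4) + a21 * 'C(36 - 21, 4) + a24 * 'C(36 - 24, 4) + a27 * 'C(36 - 27, 4) + a30 * 'C(36 - 30, 4) + a33 * 'C(36 - 33, 4) + a36 * 'C(36 - 36, 4)) * 3 ^ 4 = 3 ^ m * 'C(36, 4))%N ->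
  ((a0 * 'C(36 - 0, 5) + a9 * 'C(36 - 9, 5) + a12 * 'C(36 - 12, 5) + a15 * 'C(36 - 15, 5) + a18 * 'C(36 - 18, 5) + a21 * 'C(36 - 21, 5) + a24 * 'C(36 - 24, 5) + a27 * 'C(36 - 27, 5) + a30 * 'C(36 - 30, 5) + a33 * 'C(36 - 33, 5) + a36 * 'C(36 - 36, 5)) * 3 ^ 5 = 3 ^ m * 'C(36, 5))%N ->
  ((a0 * 'C(36 - 0, 6) + a9 * 'C(36 - 9, 6) + a12 * 'C(36 - 12, 6) + a15 * 'C(36 - 15, 6) + a18 * 'C(36 - 18, 6) + a21 * 'C(36 - 21, 6) + a24 * 'C(36 - 24, 6) + a27 * 'C(36 - 27, 6) + a30 * 'C(36 - 30, 6) + a33 * 'C(36 - 33, 6) + a36 * 'C(36 - 36, 6)) * 3 ^ 6 = 3 ^ m * 'C(36, 6))%N ->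
  ((a0 * 'C(36 - 0, 7) + a9 * 'C(36 - 9, 7) + a12 * 'C(36 - 12, 7) + a15 * 'C(36 - 15, 7) + a18 * 'C(36 - 18, 7) + a21 * 'C(36 - 21, 7) + a24 * 'C(36 - 24, 7) + a27 * 'C(36 - 27, 7) + a30 * 'C(36 - 30, 7) + a33 * 'C(36 - 33, 7) + a36 * 'C(36 - 36, 7)) * 3 ^ 7 = 3 ^ m * 'C(36, 7))%N ->
  ((a0 * 'C(36 - 0, 8) + a9 * 'C(36 - 9, 8) + a12 * 'C(36 - 12, 8) + a15 * 'C(36 - 15, 8) + a18 * 'C(36 - 18, 8) + a21 * 'C(36 - 21, 8) + a24 * 'C(36 - 24, 8) + a27 * 'C(36 - 27, 8) + a30 * 'C(36 - 30, 8) + a33 * 'C(36 - 33, 8) + a36 * 'C(36 - 36, 8)) * 3 ^ 8 = 3 ^ m * 'C(36, 8))%N ->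
  ((((b0 * 'C(36 - 0, 1) + b9 * 'C(36 - 9, 1) + b12 * 'C(36 - 12, 1) + b15 * 'C(36 - 15, 1) + b18 * 'C(36 - 18, 1) + b21 * 'C(36 - 21, 1) + b24 * 'C(36 - 24, 1) + b27 * 'C(36 - 27, 1) + b30 * 'C(36 - 30, 1) + b33 * 'C(36 - 33, 1) + b36 * 'C(36 - 36, 1))) + ((z0 * 'C(35 - 0, 1) + z9 * 'C(35 - 9, 1) + z12 * 'C(35 - 12, 1) + z15 * 'C(35 - 15, 1) + z18 * 'C(35 - 18, 1) + z21 * 'C(35 - 21, 1) + z24 * 'C(35 - 24, 1) + z27 * 'C(35 - 27, 1) + z30 * 'C(35 - 30, 1) + z33 * 'C(35 - 33, 1) + z36 * 'C(35 - 36, 1)))) * 3 ^ 1 = 3 ^ m * 'C(35, 1))%N ->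
  ((((b0 * 'C(36 - 0, 2) + b9 * 'C(36 - 9, 2) + b12 * 'C(36 - 12, 2) + b15 * 'C(36 - 15, 2) + b18 * 'C(36 - 18, 2) + b21 * 'C(36 - 21, 2) + b24 * 'C(36 - 24, 2) + b27 * 'C(36 - 27, 2) + b30 * 'C(36 - 30, 2) + b33 * 'C(36 - 33, 2) + b36 * 'C(36 - 36, 2))) + ((z0 * 'C(35 - 0, 2) + z9 * 'C(35 - 9, 2) + z12 * 'C(35 - 12, 2) + z15 * 'C(35 - 15, 2) + z18 * 'C(35 - 18, 2) + z21 * 'C(35 - 21, 2) + z24 * 'C(35 - 24, 2) + z27 * 'C(35 - 27, 2) + z30 * 'C(35 - 30, 2) + z33 * 'C(35 - 33, 2) + z36 * 'C(35 - 36, 2)))) * 3 ^ 2 = 3 ^ m * 'C(35, 2))%N ->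
  ((((b0 * 'C(36 - 0, 3) + b9 * 'C(36 - 9, 3) + b12 * 'C(36 - 12, 3) + b15 * 'C(36 - 15, 3) + b18 * 'C(36 - 18, 3) + b21 * 'C(36 - 21, 3) + b24 * 'C(36 - 24, 3) + b27 * 'C(36 - 27, 3) + b30 * 'C(36 - 30, 3) + b33 * 'C(36 - 33, 3) + b36 * 'C(36 - 36, 3))) + ((z0 * 'C(35 - 0, 3) + z9 * 'C(35 - 9, 3) + z12 * 'C(35 - 12, 3) + z15 * 'C(35 - 15, 3) + z18 * 'C(35 - 18, 3) + z21 * 'C(35 - 21, 3) + z24 * 'C(35 - 24, 3) + z27 * 'C(35 - 27, 3) + z30 * 'C(35 - 30, 3) + z33 * 'C(35 - 33, 3) + z36 * 'C(35 - 36, 3)))) * 3 ^ 3 = 3 ^ m * 'C(35, 3))%N ->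
  ((((b0 * 'C(36 - 0, 4) + b9 * 'C(36 - 9, 4) + b12 * 'C(36 - 12, 4) + b15 * 'C(36 - 15, 4) + b18 * 'C(36 - 18, 4) + b21 * 'C(36 - 21, 4) + b24 * 'C(36 - 24, 4) + b27 * 'C(36 - 27, 4) + b30 * 'C(36 - 30, 4) + b33 * 'C(36 - 33, 4) + b36 * 'C(36 - 36, 4))) + ((z0 * 'C(35 - 0, 4) + z9 * 'C(35 - 9, 4) + z12 * 'C(35 - 12, 4) + z15 * 'C(35 - 15, 4) + z18 * 'C(35 - 18, 4) + z21 * 'C(35 - 21, 4) + z24 * 'C(35 - 24, 4) + z27 * 'C(35 - 27, 4) + z30 * 'C(35 - 30, 4) + z33 * 'C(35 - 33, 4) + z36 * 'C(35 - 36, 4)))) * 3 ^ 4 = 3 ^ m * 'C(35, 4))%N ->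
  ((((b0 * 'C(36 - 0, 5) + b9 * 'C(36 - 9, 5) + b12 * 'C(36 - 12, 5) + b15 * 'C(36 - 15, 5) + b18 * 'C(36 - 18, 5) + b21 * 'C(36 - 21, 5) + b24 * 'C(36 - 24, 5) + b27 * 'C(36 - 27, 5) + b30 * 'C(36 - 30, 5) + b33 * 'C(36 - 33, 5) + b36 * 'C(36 - 36, 5))) + ((z0 * 'C(35 - 0, 5) + z9 * 'C(35 - 9, 5) + z12 * 'C(35 - 12, 5) + z15 * 'C(35 - 15, 5) + z18 * 'C(35 - 18, 5) + z21 * 'C(35 - 21, 5) + z24 * 'C(35 - 24, 5) + z27 * 'C(35 - 27, 5) + z30 * 'C(35 - 30, 5) + z33 * 'C(35 - 33, 5) + z36 * 'C(35 - 36, 5)))) * 3 ^ 5 = 3 ^ m * 'C(35, 5))%N ->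
  ((((b0 * 'C(36 - 0, 6) + b9 * 'C(36 - 9, 6) + b12 * 'C(36 - 12, 6) + b15 * 'C(36 - 15, 6) + b18 * 'C(36 - 18, 6) + b21 * 'C(36 - 21, 6) + b24 * 'C(36 - 24, 6) + b27 * 'C(36 - 27, 6) + b30 * 'C(36 - 30, 6) + b33 * 'C(36 - 33, 6) + b36 * 'C(36 - 36, 6))) + ((z0 * 'C(35 - 0, 6) + z9 * 'C(35 - 9, 6) + z12 * 'C(35 - 12, 6) + z15 * 'C(35 - 15, 6) + z18 * 'C(35 - 18, 6) + z21 * 'C(35 - 21, 6) + z24 * 'C(35 - 24, 6) + z27 * 'C(35 - 27, 6) + z30 * 'C(35 - 30, 6) + z33 * 'C(35 - 33, 6) + z36 * 'C(35 - 36, 6)))) * 3 ^ 6 = 3 ^ m * 'C(35, 6))%N ->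
  ((((b0 * 'C(36 - 0, 7) + b9 * 'C(36 - 9, 7) + b12 * 'C(36 - 12, 7) + b15 * 'C(36 - 15, 7) + b18 * 'C(36 - 18, 7) + b21 * 'C(36 - 21, 7) + b24 * 'C(36 - 24, 7) + b27 * 'C(36 - 27, 7) + b30 * 'C(36 - 30, 7) + b33 * 'C(36 - 33, 7) + b36 * 'C(36 - 36, 7))) + ((z0 * 'C(35 - 0, 7) + z9 * 'C(35 - 9, 7) + z12 * 'C(35 - 12, 7) + z15 * 'C(35 - 15, 7) + z18 * 'C(35 - 18, 7) + z21 * 'C(35 - 21, 7) + z24 * 'C(35 - 24, 7) + z27 * 'C(35 - 27, 7) + z30 * 'C(35 - 30, 7) + z33 * 'C(35 - 33, 7) + z36 * 'C(35 - 36, 7)))) * 3 ^ 7 = 3 ^ m * 'C(35, 7))%N ->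
  ((((b0 * 'C(36 - 0, 8) + b9 * 'C(36 - 9, 8) + b12 * 'C(36 - 12, 8) + b15 * 'C(36 - 15, 8) + b18 * 'C(36 - 18, 8) + b21 * 'C(36 - 21, 8) + b24 * 'C(36 - 24, 8) + b27 * 'C(36 - 27, 8) + b30 * 'C(36 - 30, 8) + b33 * 'C(36 - 33, 8) + b36 * 'C(36 - 36, 8))) + ((z0 * 'C(35 - 0, 8) + z9 * 'C(35 - 9, 8) + z12 * 'C(35 - 12, 8) + z15 * 'C(35 - 15, 8) + z18 * 'C(35 - 18, 8) + z21 * 'C(35 - 21, 8) + z24 * 'C(35 - 24, 8) + z27 * 'C(35 - 27, 8) + z30 * 'C(35 - 30, 8) + z33 * 'C(35 - 33, 8) + z36 * 'C(35 - 36, 8)))) * 3 ^ 8 = 3 ^ m * 'C(35, 8))%N ->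
  ((((b0 * 'C(36 - 0, 9) + b9 * 'C(36 - 9, 9) + b12 * 'C(36 - 12, 9) + b15 * 'C(36 - 15, 9) + b18 * 'C(36 - 18, 9) + b21 * 'C(36 - 21, 9) + b24 * 'C(36 - 24, 9) + b27 * 'C(36 - 27, 9) + b30 * 'C(36 - 30, 9) + b33 * 'C(36 - 33, 9) + b36 * 'C(36 - 36, 9))) + ((z0 * 'C(35 - 0, 9) + z9 * 'C(35 - 9, 9) + z12 * 'C(35 - 12, 9) + z15 * 'C(35 - 15, 9) + z18 * 'C(35 - 18, 9) + z21 * 'C(35 - 21, 9) + z24 * 'C(35 - 24, 9) + z27 * 'C(35 - 27, 9) + z30 * 'C(35 - 30, 9) + z33 * 'C(35 - 33, 9) + z36 * 'C(35 - 36, 9)))) * 3 ^ 9 = 3 ^ m * ('C(35, 9) + z9))%N ->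
  a9 = (b9 + z9)%N ->
  a12 = (b12 + z12)%N ->
  a15 = (b15 + z15)%N ->
  a18 = (b18 + z18)%N ->
  a21 = (b21 + z21)%N ->
  a24 = (b24 + z24)%N ->
  a27 = (b27 + z27)%N ->
  a30 = (b30 + z30)%N ->
  a33 = (b33 + z33)%N ->
  a36 = (b36 + z36)%N ->
  a0 = 1%N ->
  b0 = 0%N ->
  z0 = 1%N ->
  a9 = (4 * b9)%N /\ (a9 + a36 = 888)%N.
Proof.
move=> hm G0 G1 G2 G3 G4 G5 G6 G7 G8 L1 L2 L3 L4 L5 L6 L7 L8 L9 S9 S12 S15 S18 S21 S24 S27 S30 S33 S36 A0e B0e Z0e.
have [K1 K2] : Z.of_nat a9 = 4 * Z.of_nat b9 /\ Z.of_nat a9 + Z.of_nat a36 = 888.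
  apply: (arithZ (Z.of_nat a0) (Z.of_nat a9) (Z.of_nat a12) (Z.of_nat a15) (Z.of_nat a18) (Z.of_nat a21) (Z.of_nat a24) (Z.of_nat a27) (Z.of_nat a30) (Z.of_nat a33) (Z.of_nat a36) (Z.of_nat b0) (Z.of_nat b9) (Z.of_nat b12) (Z.of_nat b15) (Z.of_nat b18) (Z.of_nat b21) (Z.of_nat b24) (Z.of_nat b27) (Z.of_nat b30) (Z.of_nat b33) (Z.of_nat b36) (Z.of_nat z0) (Z.of_nat z9) (Z.of_nat z12) (Z.of_nat z15) (Z.of_nat z18) (Z.of_nat z21) (Z.of_nat z24) (Z.of_nat z27) (Z.of_nat z30) (Z.of_nat z33) (Z.of_nat z36)).
  - have H := convG _ _ _ _ _ _ _ _ _ _ _ _ _ _ _ _ _ _ _ _ _ _ _ _ _ G0 hm; clear - H; evalZ; lia.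
  - have H := convG _ _ _ _ _ _ _ _ _ _ _ _ _ _ _ _ _ _ _ _ _ _ _ _ _ G1 hm; clear - H; evalZ; lia.
  - have H := convG _ _ _ _ _ _ _ _ _ _ _ _ _ _ _ _ _ _ _ _ _ _ _ _ _ G2 hm; clear - H; evalZ; lia.
  - have H := convG _ _ _ _ _ _ _ _ _ _ _ _ _ _ _ _ _ _ _ _ _ _ _ _ _ G3 hm; clear - H; evalZ; lia.
  - have H := convG _ _ _ _ _ _ _ _ _ _ _ _ _ _ _ _ _ _ _ _ _ _ _ _ _ G4 hm; clear - H; evalZ; lia.
  - have H := convG _ _ _ _ _ _ _ _ _ _ _ _ _ _ _ _ _ _ _ _ _ _ _ _ _ G5 hm; clear - H; evalZ; lia.
  - have H := convG _ _ _ _ _ _ _ _ _ _ _ _ _ _ _ _ _ _ _ _ _ _ _ _ _ G6 hm; clear - H; evalZ; lia.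
  - have H := convG _ _ _ _ _ _ _ _ _ _ _ _ _ _ _ _ _ _ _ _ _ _ _ _ _ G7 hm; clear - H; evalZ; lia.
  - have H := convG _ _ _ _ _ _ _ _ _ _ _ _ _ _ _ _ _ _ _ _ _ _ _ _ _ G8 hm; clear - H; evalZ; lia.
  - have H := convL _ _ _ _ _ _ _ _ _ _ _ _ _ _ _ _ _ _ _ _ _ _ _ _ _ _ _ _ _ _ _ _ _ _ _ _ _ _ _ _ _ _ _ _ _ _ _ L1 hm; clear - H; evalZ; lia.
  - have H := convL _ _ _ _ _ _ _ _ _ _ _ _ _ _ _ _ _ _ _ _ _ _ _ _ _ _ _ _ _ _ _ _ _ _ _ _ _ _ _ _ _ _ _ _ _ _ _ L2 hm; clear - H; evalZ; lia.
  - have H := convL _ _ _ _ _ _ _ _ _ _ _ _ _ _ _ _ _ _ _ _ _ _ _ _ _ _ _ _ _ _ _ _ _ _ _ _ _ _ _ _ _ _ _ _ _ _ _ L3 hm; clear - H; evalZ; lia.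
  - have H := convL _ _ _ _ _ _ _ _ _ _ _ _ _ _ _ _ _ _ _ _ _ _ _ _ _ _ _ _ _ _ _ _ _ _ _ _ _ _ _ _ _ _ _ _ _ _ _ L4 hm; clear - H; evalZ; lia.
  - have H := convL _ _ _ _ _ _ _ _ _ _ _ _ _ _ _ _ _ _ _ _ _ _ _ _ _ _ _ _ _ _ _ _ _ _ _ _ _ _ _ _ _ _ _ _ _ _ _ L5 hm; clear - H; evalZ; lia.
  - have H := convL _ _ _ _ _ _ _ _ _ _ _ _ _ _ _ _ _ _ _ _ _ _ _ _ _ _ _ _ _ _ _ _ _ _ _ _ _ _ _ _ _ _ _ _ _ _ _ L6 hm; clear - H; evalZ; lia.
  - have H := convL _ _ _ _ _ _ _ _ _ _ _ _ _ _ _ _ _ _ _ _ _ _ _ _ _ _ _ _ _ _ _ _ _ _ _ _ _ _ _ _ _ _ _ _ _ _ _ L7 hm; clear - H; evalZ; lia.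
  - have H := convL _ _ _ _ _ _ _ _ _ _ _ _ _ _ _ _ _ _ _ _ _ _ _ _ _ _ _ _ _ _ _ _ _ _ _ _ _ _ _ _ _ _ _ _ _ _ _ L8 hm; clear - H; evalZ; lia.
  - have H := convL9 _ _ _ _ _ _ _ _ _ _ _ _ _ _ _ _ _ _ _ _ _ _ _ _ _ _ _ _ _ _ _ _ _ _ _ _ _ _ _ _ _ _ _ _ _ _ _ _ L9 hm; clear - H; evalZ; lia.
  - clear - S9; lia.
  - clear - S12; lia.
  - clear - S15; lia.
  - clear - S18; lia.
  - clear - S21; lia.
  - clear - S24; lia.
  - clear - S27; lia.
  - clear - S30; lia.
  - clear - S33; lia.
  - clear - S36; lia.
  - clear - A0e; lia.
  - clear - B0e; lia.
  - clear - Z0e; lia.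
split; lia.
Qed.

End ZA.


Set Implicit Arguments. Unset Strict Implicit. Unset Printing Implicit Defensive.
Import GRing.Theory.
Local Open Scope ring_scope.


Definition supp (x : 'rV['F_3]_36) : {set 'I_36} := [set k | x 0 k != 0].

Lemma wtE x : wt x = #|supp x|. Proof. by []. Qed.

Definition Cmx (C : ternary_code 36) : 'M['F_3]_(\dim C, 36) :=
  \matrix_(j < \dim C) (vbasis C)`_j.

Lemma memC_mx (C : ternary_code 36) (x : 'rV['F_3]_36) : (x \in C) = (x <= Cmx C)%MS.
Proof.
apply/idP/idP.
- move=> xC; rewrite (coord_vbasis xC); apply: summx_sub => j _.
  apply: scalemx_sub; have <- : row j (Cmx C) = (vbasis C)`_j by rewrite rowK.
  exact: row_sub.
- case/submxP => c ->; rewrite mulmx_sum_row; apply: memv_suml => j _.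
  apply: memvZ; rewrite rowK; apply: vbasis_mem; apply: mem_nth.
  by rewrite size_tuple.
Qed.

Lemma tdotE (x y : 'rV['F_3]_36) : tdot x y = (x *m y^T) 0 0.
Proof. by rewrite /tdot !mxE; apply: eq_bigr => k _; rewrite mxE. Qed.

Lemma orth_mx (C : ternary_code 36) (sd : self_dual C) (y : 'rV['F_3]_36) :
  (y <= Cmx C)%MS = (y *m (Cmx C)^T == 0).
Proof.
rewrite -memC_mx; apply/idP/eqP.
- move=> yC; apply/matrixP => i j; rewrite (ord1 i) [RHS]mxE.
  have := (proj1 (sd y)) yC (row j (Cmx C)).
  rewrite memC_mx row_sub => /(_ isT) h.
  transitivity (tdot (row j (Cmx C)) y); last exact: h.
  rewrite /tdot mxE; apply: eq_bigr => k _; by rewrite !mxE mulrC.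
- move=> H; apply/(proj2 (sd y)) => x; rewrite memC_mx => /submxP [c ->].
  rewrite tdotE -mulmxA.
  have -> : Cmx C *m y^T = (y *m (Cmx C)^T)^T by rewrite trmx_mul trmxK.
  by rewrite H trmx0 !mulmx0 mxE.
Qed.

Lemma eqmx_rows m1 m2 (A : 'M['F_3]_(m1, 36)) (B : 'M['F_3]_(m2, 36)) :
  (forall y : 'rV_36, (y <= A)%MS = (y <= B)%MS) -> (A == B)%MS.
Proof.
move=> H; apply/andP; split; apply/row_subP => i; first by rewrite -H row_sub.
by rewrite H row_sub.
Qed.

Lemma rank_C (C : ternary_code 36) (sd : self_dual C) : \rank (Cmx C) = 18%N.
Proof.
have e : (Cmx C == kermx (Cmx C)^T)%MS.
  by apply: eqmx_rows => y; rewrite sub_kermx orth_mx.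
have := eqmx_rank e; rewrite mxrank_ker mxrank_tr.
have := rank_leq_col (Cmx C).
lia.
Qed.


Definition Emx (S : {set 'I_36}) : 'M['F_3]_36 :=
  diag_mx (\row_k ((k \in S)%:R : 'F_3)).

Lemma mulE (y : 'rV['F_3]_36) S :
  y *m Emx S = \row_k (if k \in S then y 0 k else 0).
Proof.
rewrite mul_mx_diag; apply/matrixP => i k; rewrite (ord1 i) !mxE.
by case: (k \in S); rewrite ?mulr1 ?mulr0.
Qed.

Lemma subE (y : 'rV['F_3]_36) S : (y <= Emx S)%MS = (supp y \subset S).
Proof.
apply/idP/idP.
- case/submxP => c ->; apply/subsetP => k; rewrite inE mulE mxE.
  by case: (k \in S); rewrite ?eqxx.
- move=> sS; have -> : y = y *m Emx S.
    rewrite mulE; apply/matrixP => i k; rewrite (ord1 i) mxE.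
    case kS: (k \in S) => //; apply/eqP; apply: contraFT kS => nz.
    by apply: (subsetP sS); rewrite inE.
  exact: submxMl.
Qed.

Lemma kerEmx (y : 'rV['F_3]_36) S : (y *m (Emx S)^T == 0) = (supp y \subset ~: S).
Proof.
rewrite tr_diag_mx -/(Emx S) mulE; apply/eqP/subsetP.
- move=> h k; rewrite !inE; apply: contra => kS.
  by have := congr1 (fun m : 'rV['F_3]_36 => m 0 k) h; rewrite !mxE kS => ->.
- move=> h; apply/matrixP => i k; rewrite (ord1 i) !mxE.
  case kS: (k \in S) => //; apply/eqP; apply/negPn/negP => nz.
  by have := h k; rewrite !inE nz kS => /(_ isT).
Qed.

Lemma card_supp (S : {set 'I_36}) :
  #|[set y : 'rV['F_3]_36 | supp y \subset S]| = (3 ^ #|S|)%N.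
Proof.
pose g (y : 'rV['F_3]_36) : {ffun 'I_36 -> 'F_3} := [ffun k => y 0 k].
have ginj : injective g.
  move=> y1 y2 /ffunP h; apply/matrixP => i k; rewrite (ord1 i).
  by have := h k; rewrite !ffunE.
have -> : (3 ^ #|S|)%N = #|pffun_on (0 : 'F_3) S predT|.
  by rewrite card_pffun_on card_Fp.
rewrite -(card_imset _ ginj).
apply: eq_card => f; apply/imsetP/pffun_onP.
- case=> y; rewrite inE => sS ->; split => [|z _]; last by [].
  apply/subsetP => k; rewrite inE ffunE => nz; apply: (subsetP sS).
  by rewrite inE.
- case=> sS _; exists (\row_k f k); last by apply/ffunP => k; rewrite !ffunE mxE.
  rewrite inE; apply/subsetP => k; rewrite inE mxE => nz.
  by apply: (subsetP sS); rewrite inE.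
Qed.

Lemma rank_E S : \rank (Emx S) = #|S|.
Proof.
have h : #|rowg (Emx S)| = (3 ^ #|S|)%N.
  rewrite -card_supp; apply: eq_card => y; by rewrite !inE subE.
rewrite card_rowg card_Fp // in h.
by apply/eqP; rewrite -(@eqn_exp2l 3) // h.
Qed.


Lemma card_CT (C : ternary_code 36) (T : {set 'I_36}) :
  #|[set x : 'rV['F_3]_36 | (x \in C) && (supp x \subset T)]| =
  (3 ^ \rank (Cmx C :&: Emx T)%MS)%N.
Proof.
have := card_rowg (Cmx C :&: Emx T)%MS; rewrite card_Fp // => <-.
by apply: eq_card => x; rewrite !inE sub_capmx memC_mx subE.
Qed.

Lemma keyS (C : ternary_code 36) (sd : self_dual C) (S : {set 'I_36}) :
  (#|[set x : 'rV['F_3]_36 | (x \in C) && (supp x \subset ~: S)]| * 3 ^ #|S| =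
  3 ^ 18 * #|[set x : 'rV['F_3]_36 | (x \in C) && (supp x \subset S)]|)%N.
Proof.
rewrite !card_CT -!expnD; congr (3 ^ _)%N.
have h1 := mxrank_sum_cap (Cmx C) (Emx (~: S)).
have h2 : \rank (Cmx C + Emx (~: S))%MS = \rank (col_mx (Cmx C) (Emx (~: S))).
  by apply: eqmx_rank; apply/eqmxP; apply: addsmxE.
have h3 : (kermx (col_mx (Cmx C) (Emx (~: S)))^T == Cmx C :&: Emx S)%MS.
  apply: eqmx_rows => y.
  by rewrite sub_kermx tr_col_mx mul_mx_row row_mx_eq0 -orth_mx // kerEmx setCK sub_capmx subE.
have h4 := eqmx_rank h3.
rewrite mxrank_ker mxrank_tr in h4.
have h5 := rank_leq_col (col_mx (Cmx C) (Emx (~: S))).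
have h6 := rank_E (~: S).
have h7 := cardsC S; rewrite card_ord in h7.
have h8 := rank_C sd.
lia.
Qed.


Definition DS (U : {set 'I_36}) (nu : nat) :=
  [set S : {set 'I_36} | (S \subset U) && (#|S| == nu)].

Definition N1 (C : ternary_code 36) (S : {set 'I_36}) :=
  #|[set x : 'rV['F_3]_36 | (x \in C) && (supp x \subset ~: S)]|.
Definition N2 (C : ternary_code 36) (S : {set 'I_36}) :=
  #|[set x : 'rV['F_3]_36 | (x \in C) && (supp x \subset S)]|.

Lemma keyN (C : ternary_code 36) (sd : self_dual C) (S : {set 'I_36}) :
  (N1 C S * 3 ^ #|S| = 3 ^ 18 * N2 C S)%N.
Proof. exact: (keyS sd S). Qed.

Lemma keyN' (C : ternary_code 36) (sd : self_dual C) (S : {set 'I_36}) nu m :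
  m = 18%N -> #|S| = nu -> (N1 C S * 3 ^ nu = 3 ^ m * N2 C S)%N.
Proof. by move=> -> <-; exact: keyN. Qed.

Lemma sumkey (C : ternary_code 36) (sd : self_dual C) U nu m : m = 18%N ->
  ((\sum_(S in DS U nu) N1 C S) * 3 ^ nu = 3 ^ m * \sum_(S in DS U nu) N2 C S)%N.
Proof.
move=> hm; rewrite big_distrl big_distrr; apply: eq_bigr => S; rewrite inE => /andP[_ /eqP hS].
exact: keyN'.
Qed.

Lemma card_sumb (T : finType) (Q : pred T) : #|[set x | Q x]| = (\sum_x (Q x : nat))%N.
Proof. by rewrite -sum1dep_card big_mkcond; apply: eq_bigr => x _; case: (Q x). Qed.

Lemma exch (T1 T2 : finType) (A : {set T1}) (P : pred T2) (R : T1 -> T2 -> bool) :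
  (\sum_(a in A) #|[set b | P b && R a b]| = \sum_(b | P b) #|[set a in A | R a b]|)%N.
Proof.
rewrite (eq_bigr (fun a => \sum_b ((P b && R a b) : nat))%N); last by move=> a _; rewrite card_sumb.
rewrite exchange_big /= [RHS]big_mkcond; apply: eq_bigr => b _.
rewrite card_sumb; case: (P b) => /=; last by rewrite big1.
by rewrite big_mkcond; apply: eq_bigr => a _; case: (a \in A).
Qed.

Lemma cnt_disj (x : 'rV['F_3]_36) U nu :
  #|[set S in DS U nu | supp x \subset ~: S]| = 'C(#|U :\: supp x|, nu).
Proof.
rewrite -cards_draws; apply: eq_card => S; rewrite !inE setDE subsetI.
rewrite [supp x \subset ~: S]subsetC.
by case: (S \subset U); case: (_ == nu); case: (S \subset ~: supp x).
Qed.

Lemma supp0 : supp 0 = set0.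
Proof. by apply/setP => k; rewrite !inE mxE eqxx. Qed.

Lemma cnt_sup0 U nu : #|[set S in DS U nu | supp 0 \subset S]| = 'C(#|U|, nu).
Proof.
rewrite -cards_draws; apply: eq_card => S; rewrite !inE supp0 sub0set andbT.
by [].
Qed.

Lemma cnt_sup_small (y : 'rV['F_3]_36) U nu :
  (nu < wt y)%N -> #|[set S in DS U nu | supp y \subset S]| = 0%N.
Proof.
move=> lt; apply: eq_card0 => S; rewrite !inE; apply/negP.
case/andP => /andP [_ /eqP cS] yS; have := subset_leq_card yS.
by rewrite cS -wtE leqNgt lt.
Qed.

Lemma cnt_sup9 (y : 'rV['F_3]_36) U :
  wt y = 9%N -> #|[set S in DS U 9 | supp y \subset S]| = (supp y \subset U) :> nat.
Proof.
move=> w9; case sU: (supp y \subset U).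
- rewrite (_ : [set S in DS U 9 | supp y \subset S] = [set supp y]) ?cards1 //.
  apply/setP => S; rewrite !inE; apply/idP/eqP.
  + case/andP => /andP [SU /eqP cS] yS; apply/eqP; rewrite eq_sym eqEcard yS cS.
    by rewrite -wtE w9.
  + by move=> ->; rewrite sU -wtE w9 subxx.
- apply: eq_card0 => S; rewrite !inE; apply/negP.
  case/andP => /andP [SU _] yS; have := subset_trans yS SU.
  by rewrite sU.
Qed.


Lemma F3_sq (a : 'F_3) : a * a = (a != 0)%:R.
Proof. by case: a => [[|[|[|]]] //= ?]; apply/val_inj. Qed.

Lemma tdot_self (x : 'rV['F_3]_36) : tdot x x = (wt x)%:R.
Proof.
rewrite /tdot (eq_bigr (fun k => ((x 0 k != 0) : nat)%:R)); last first.
  by move=> k _; rewrite F3_sq.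
by rewrite -natr_sum wtE /supp (card_sumb (fun k : 'I_36 => x 0 k != 0)).
Qed.

Lemma wt_mod3 (C : ternary_code 36) (sd : self_dual C) x : x \in C -> (3 %| wt x)%N.
Proof.
move=> xC; have := (proj1 (sd x)) xC x xC; rewrite tdot_self.
rewrite -(Fp_nat_mod (p:=3)) //.
have : (wt x %% 3 < 3)%N by rewrite ltn_pmod.
by rewrite /dvdn; case: (wt x %% 3)%N => [|[|[|]]] //= _.
Qed.

Lemma wt0 (x : 'rV['F_3]_36) : wt x = 0%N -> x = 0.
Proof.
rewrite wtE => /eqP; rewrite cards_eq0 => /eqP h.
apply/matrixP => i k; rewrite (ord1 i) mxE; apply/eqP/negPn/negP => nz.
have : k \in supp x by rewrite inE.
by rewrite h inE.
Qed.

Lemma wt_le (x : 'rV['F_3]_36) : (wt x <= 36)%N.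
Proof. by have := max_card (supp x); rewrite card_ord. Qed.

Definition Lw : seq nat := [:: 0; 9; 12; 15; 18; 21; 24; 27; 30; 33; 36]%N.

Lemma wtL (C : ternary_code 36) (hC : near_extremal36 C) x : x \in C -> wt x \in Lw.
Proof.
case: hC => sd [_ mw] xC.
have h3 := wt_mod3 sd xC; have hle := wt_le x.
have h9 : (wt x == 0%N) || (9 <= wt x)%N.
  case: (x =P 0) => [->|nz].
    by rewrite wtE supp0 cards0.
  by rewrite mw ?orbT //; apply/eqP.
have : all (fun j => ((j == 0) || (9 <= j)) && (3 %| j) ==> (j \in Lw))%N (iota 0 37).
  by [].
move/allP/(_ (wt x)); rewrite mem_iota /= ltnS hle h9 h3 /=.
by apply.
Qed.

Lemma cnt_notL (C : ternary_code 36) (hC : near_extremal36 C) (Q : pred 'rV['F_3]_36) j :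
  j \notin Lw -> #|[set x : 'rV['F_3]_36 | ((x \in C) && Q x) && (wt x == j)]| = 0%N.
Proof.
move=> jL; apply: eq_card0 => x; rewrite !inE; apply/negP.
case/andP => /andP [xC _] /eqP wj; have := wtL hC xC.
by rewrite wj (negbTE jL).
Qed.

Lemma cnt_notL' (C : ternary_code 36) (hC : near_extremal36 C) j :
  j \notin Lw -> #|[set x : 'rV['F_3]_36 | (x \in C) && (wt x == j)]| = 0%N.
Proof.
move=> jL; apply: eq_card0 => x; rewrite !inE; apply/negP.
case/andP => xC /eqP wj; have := wtL hC xC.
by rewrite wj (negbTE jL).
Qed.


Lemma gen_eq (C : ternary_code 36) (sd : self_dual C) U nu m : m = 18%N ->
  ((\sum_(x | x \in C) 'C(#|U :\: supp x|, nu)) * 3 ^ nu =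
   3 ^ m * \sum_(y | y \in C) #|[set S in DS U nu | supp y \subset S]|)%N.
Proof.
move=> hm; have := sumkey sd U nu hm; rewrite /N1 /N2.
rewrite (exch (DS U nu) (fun x => x \in C) (fun S x => supp x \subset ~: S)).
rewrite (exch (DS U nu) (fun x => x \in C) (fun S x => supp x \subset S)).
rewrite (eq_bigr (fun x => 'C(#|U :\: supp x|, nu))) //.
by move=> x _; rewrite cnt_disj.
Qed.

Lemma group_wt (P : pred 'rV['F_3]_36) (f : nat -> nat) :
  (\sum_(x | P x) f (wt x) =
   \sum_(j < 37) #|[set x | P x && (wt x == j)]| * f j)%N.
Proof.
rewrite (partition_big (fun x => (inord (wt x) : 'I_37)) predT) //=.
apply: eq_bigr => j _; rewrite -sum_nat_cond_const.
apply: eq_big => [x|x /andP [_ /eqP <-]]; last by rewrite inordK // ltnS wt_le.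
have hw : (wt x < 37)%N by rewrite ltnS wt_le.
by rewrite -(inj_eq val_inj) /= inordK.
Qed.

Lemma expand37 (F : nat -> nat) : (forall j, j \notin Lw -> F j = 0%N) ->
  (\sum_(j < 37) F j = F 0 + F 9 + F 12 + F 15 + F 18 + F 21 + F 24 + F 27 + F 30 + F 33 + F 36)%N.
Proof.
move=> H; rewrite -(big_mkord xpredT F) /index_iota /= !big_cons big_nil.
rewrite (H 1) // (H 2) // (H 3) // (H 4) // (H 5) // (H 6) // (H 7) // (H 8) // (H 10) // (H 11) // (H 13) // (H 14) // (H 16) // (H 17) // (H 19) // (H 20) // (H 22) // (H 23) // (H 25) // (H 26) // (H 28) // (H 29) // (H 31) // (H 32) // (H 34) // (H 35) //.
by rewrite !add0n !addn0 !addnA.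
Qed.


Lemma rhs_small (C : ternary_code 36) (hC : near_extremal36 C) U nu : (nu <= 8)%N ->
  (\sum_(y | y \in C) #|[set S in DS U nu | supp y \subset S]| = 'C(#|U|, nu))%N.
Proof.
case: hC => sd [_ mw] hnu.
rewrite (bigD1 0) ?mem0v //= cnt_sup0 big1 ?addn0 //.
move=> y /andP [yC nz]; apply: cnt_sup_small.
have := mw y yC nz; lia.
Qed.

Lemma glob_eq (C : ternary_code 36) (hC : near_extremal36 C) nu m : m = 18%N -> (nu <= 8)%N ->
  ((num_weight C 0 * 'C(36 - 0, nu) + num_weight C 9 * 'C(36 - 9, nu) +
    num_weight C 12 * 'C(36 - 12, nu) + num_weight C 15 * 'C(36 - 15, nu) +
    num_weight C 18 * 'C(36 - 18, nu) + num_weight C 21 * 'C(36 - 21, nu) +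
    num_weight C 24 * 'C(36 - 24, nu) + num_weight C 27 * 'C(36 - 27, nu) +
    num_weight C 30 * 'C(36 - 30, nu) + num_weight C 33 * 'C(36 - 33, nu) +
    num_weight C 36 * 'C(36 - 36, nu)) * 3 ^ nu = 3 ^ m * 'C(36, nu))%N.
Proof.
move=> hm hnu; case: (hC) => sd _.
have := gen_eq sd setT nu hm.
rewrite (eq_bigr (fun x => 'C(36 - wt x, nu))); last first.
  move=> x _; rewrite setTD; congr binomial; have := cardsC (supp x); rewrite card_ord wtE; lia.
rewrite (group_wt (fun x => x \in C) (fun w => 'C(36 - w, nu))).
rewrite (@expand37 (fun j => #|[set x | (x \in C) && (wt x == j)]| * 'C(36 - j, nu))%N); last first.
  by move=> j jL; rewrite cnt_notL'.
rewrite rhs_small // cardsT card_ord.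
rewrite /num_weight.
by [].
Qed.


Lemma cardU (x : 'rV['F_3]_36) i :
  #|~: [set i] :\: supp x| = (if (x 0 i != 0)%R then 36 - wt x else 35 - wt x)%N.
Proof.
rewrite setDE -setCU.
have := cardsC ([set i] :|: supp x); rewrite card_ord.
have := cardsU1 i (supp x); rewrite inE wtE.
case: (x 0 i != 0) => /=; lia.
Qed.

Lemma suppC1 (y : 'rV['F_3]_36) i : (supp y \subset ~: [set i]) = (y 0 i == 0).
Proof. by rewrite subsetC sub1set !inE negbK. Qed.

Lemma loc_gen (C : ternary_code 36) (hC : near_extremal36 C) i nu m : m = 18%N ->
  ((( #|[set x | ((x \in C) && (x 0 i != 0)%R) && (wt x == 0)]| * 'C(36 - 0, nu) +
      #|[set x | ((x \in C) && (x 0 i != 0)%R) && (wt x == 9)]| * 'C(36 - 9, nu) +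
      #|[set x | ((x \in C) && (x 0 i != 0)%R) && (wt x == 12)]| * 'C(36 - 12, nu) +
      #|[set x | ((x \in C) && (x 0 i != 0)%R) && (wt x == 15)]| * 'C(36 - 15, nu) +
      #|[set x | ((x \in C) && (x 0 i != 0)%R) && (wt x == 18)]| * 'C(36 - 18, nu) +
      #|[set x | ((x \in C) && (x 0 i != 0)%R) && (wt x == 21)]| * 'C(36 - 21, nu) +
      #|[set x | ((x \in C) && (x 0 i != 0)%R) && (wt x == 24)]| * 'C(36 - 24, nu) +
      #|[set x | ((x \in C) && (x 0 i != 0)%R) && (wt x == 27)]| * 'C(36 - 27, nu) +
      #|[set x | ((x \in C) && (x 0 i != 0)%R) && (wt x == 30)]| * 'C(36 - 30, nu) +
      #|[set x | ((x \in C) && (x 0 i != 0)%R) && (wt x == 33)]| * 'C(36 - 33, nu) +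
      #|[set x | ((x \in C) && (x 0 i != 0)%R) && (wt x == 36)]| * 'C(36 - 36, nu)) +
     ( #|[set x | ((x \in C) && (x 0 i == 0)%R) && (wt x == 0)]| * 'C(35 - 0, nu) +
      #|[set x | ((x \in C) && (x 0 i == 0)%R) && (wt x == 9)]| * 'C(35 - 9, nu) +
      #|[set x | ((x \in C) && (x 0 i == 0)%R) && (wt x == 12)]| * 'C(35 - 12, nu) +
      #|[set x | ((x \in C) && (x 0 i == 0)%R) && (wt x == 15)]| * 'C(35 - 15, nu) +
      #|[set x | ((x \in C) && (x 0 i == 0)%R) && (wt x == 18)]| * 'C(35 - 18, nu) +
      #|[set x | ((x \in C) && (x 0 i == 0)%R) && (wt x == 21)]| * 'C(35 - 21, nu) +
      #|[set x | ((x \in C) && (x 0 i == 0)%R) && (wt x == 24)]| * 'C(35 - 24, nu) +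
      #|[set x | ((x \in C) && (x 0 i == 0)%R) && (wt x == 27)]| * 'C(35 - 27, nu) +
      #|[set x | ((x \in C) && (x 0 i == 0)%R) && (wt x == 30)]| * 'C(35 - 30, nu) +
      #|[set x | ((x \in C) && (x 0 i == 0)%R) && (wt x == 33)]| * 'C(35 - 33, nu) +
      #|[set x | ((x \in C) && (x 0 i == 0)%R) && (wt x == 36)]| * 'C(35 - 36, nu))) * 3 ^ nu =
   3 ^ m * \sum_(y | y \in C) #|[set S in DS (~: [set i]) nu | supp y \subset S]|)%N.
Proof.
move=> hm; case: (hC) => sd _.
have := gen_eq sd (~: [set i]) nu hm.
rewrite (bigID (fun x : 'rV['F_3]_36 => x 0 i != 0)) /=.
have e1 : (\sum_(x | (x \in C) && (x 0 i != 0)%R) 'C(#|~: [set i] :\: supp x|, nu) =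
    \sum_(x | (x \in C) && (x 0 i != 0)%R) 'C(36 - wt x, nu))%N.
  by apply: eq_bigr => x /andP [_ nz]; rewrite cardU nz.
have e2 : (\sum_(x | (x \in C) && ~~ (x 0 i != 0)%R) 'C(#|~: [set i] :\: supp x|, nu) =
    \sum_(x | (x \in C) && (x 0 i == 0)%R) 'C(35 - wt x, nu))%N.
  rewrite (eq_bigl (fun x => (x \in C) && (x 0 i == 0)%R)); last by move=> x; rewrite negbK.
  by apply: eq_bigr => x /andP [_ z]; rewrite cardU z.
rewrite e1 e2.
rewrite (group_wt (fun x => (x \in C) && (x 0 i != 0)%R) (fun w => 'C(36 - w, nu))).
rewrite (group_wt (fun x => (x \in C) && (x 0 i == 0)%R) (fun w => 'C(35 - w, nu))).
rewrite (@expand37 (fun j => #|[set x | ((x \in C) && (x 0 i != 0)%R) && (wt x == j)]| * 'C(36 - j, nu))%N); last first.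
  by move=> j jL; rewrite (cnt_notL hC).
rewrite (@expand37 (fun j => #|[set x | ((x \in C) && (x 0 i == 0)%R) && (wt x == j)]| * 'C(35 - j, nu))%N); last first.
  by move=> j jL; rewrite (cnt_notL hC).
by [].
Qed.

Lemma rhs9 (C : ternary_code 36) (hC : near_extremal36 C) i :
  (\sum_(y | y \in C) #|[set S in DS (~: [set i]) 9 | supp y \subset S]| =
   'C(35, 9) + #|[set x | ((x \in C) && (x 0 i == 0)%R) && (wt x == 9)]|)%N.
Proof.
case: (hC) => sd [_ mw].
rewrite (bigD1 0) ?mem0v //= cnt_sup0 cardsC1 card_ord /=; congr (_ + _)%N.
rewrite (eq_bigr (fun y : 'rV['F_3]_36 => ((y 0 i == 0) && (wt y == 9%N) : nat))); last first.
  move=> y /andP [yC nz]; case: (wt y =P 9%N) => [w9|nw].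
    by rewrite andbT cnt_sup9 // suppC1.
  rewrite andbF; apply: cnt_sup_small; have := mw y yC nz; move/eqP: nw; lia.
rewrite card_sumb big_mkcond; apply: eq_bigr => y _.
case yC: (y \in C) => //=; case: (y =P 0) => [->|nz] //=.
by rewrite wtE supp0 cards0 andbF.
Qed.


Lemma splitBZ (C : ternary_code 36) i j :
  num_weight C j = (#|[set x | ((x \in C) && (x 0 i != 0)%R) && (wt x == j)]| +
                    #|[set x | ((x \in C) && (x 0 i == 0)%R) && (wt x == j)]|)%N.
Proof.
rewrite /num_weight -(cardsID [set x : 'rV['F_3]_36 | x 0 i != 0]).
congr (_ + _)%N; apply: eq_card => x; rewrite !inE.
- by case: (x \in C); case: (x 0 i != 0); case: (wt x == j).
- by case: (x \in C); case: (x 0 i == 0); case: (wt x == j).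
Qed.

Lemma wt_opp (x : 'rV['F_3]_36) : wt (- x) = wt x.
Proof. by rewrite !wtE; apply: eq_card => k; rewrite !inE mxE oppr_eq0. Qed.

Lemma F3_cases (a : 'F_3) : a != 0 -> a != 1 -> a = -1.
Proof. by case: a => [[|[|[|]]] //= ?] _ _; apply/val_inj. Qed.

Lemma B9_even (C : ternary_code 36) i :
  exists p, #|[set x | ((x \in C) && (x 0 i != 0)%R) && (wt x == 9%N)]| = (2 * p)%N.
Proof.
set B := [set x | _].
exists #|B :&: [set x : 'rV['F_3]_36 | x 0 i == 1]|.
rewrite -(cardsID [set x : 'rV['F_3]_36 | x 0 i == 1] B) mul2n -addnn; congr (_ + _)%N.
rewrite -(card_imset _ (@oppr_inj _)); apply: eq_card => y; rewrite !inE.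
apply/imsetP/idP.
- case=> x; rewrite !inE => /andP [nS /andP[/andP[xC nz] w9]] ->.
  by rewrite memvN xC wt_opp w9 mxE (F3_cases nz nS) opprK.
- case/andP => /andP[/andP[yC nz] w9] /eqP y1.
  exists (- y); last by rewrite opprK.
  by rewrite !inE memvN yC wt_opp w9 mxE y1.
Qed.


Lemma wt_eq0 (x : 'rV['F_3]_36) : (wt x == 0%N) = (x == 0).
Proof.
apply/eqP/eqP => [/wt0 //|->]; by rewrite wtE supp0 cards0.
Qed.

Lemma A0_eq (C : ternary_code 36) : num_weight C 0 = 1%N.
Proof.
rewrite /num_weight -[RHS](cards1 (0 : 'rV['F_3]_36)); apply: eq_card => x.
by rewrite !inE wt_eq0; case: (x =P 0) => [->|]; rewrite ?mem0v ?andbF.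
Qed.

Lemma B0_eq (C : ternary_code 36) i :
  #|[set x | ((x \in C) && (x 0 i != 0)%R) && (wt x == 0%N)]| = 0%N.
Proof.
apply: eq_card0 => x; rewrite !inE wt_eq0.
by case: (x =P 0) => [->|]; rewrite ?mxE ?eqxx ?andbF.
Qed.

Lemma Z0_eq (C : ternary_code 36) i :
  #|[set x | ((x \in C) && (x 0 i == 0)%R) && (wt x == 0%N)]| = 1%N.
Proof.
rewrite -[RHS](cards1 (0 : 'rV['F_3]_36)); apply: eq_card => x.
by rewrite !inE wt_eq0; case: (x =P 0) => [->|]; rewrite ?mem0v ?mxE ?eqxx ?andbF.
Qed.

Lemma A9_pos (C : ternary_code 36) : near_extremal36 C -> (0 < num_weight C 9)%N.
Proof.
case=> _ [[x xC /andP [nz w9]] _]; apply/card_gt0P; exists x.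
by rewrite inE xC w9.
Qed.


Lemma loc8 (C : ternary_code 36) (hC : near_extremal36 C) i nu m : m = 18%N -> (nu <= 8)%N ->
  ((( #|[set x | ((x \in C) && (x 0 i != 0)%R) && (wt x == 0)]| * 'C(36 - 0, nu) +
      #|[set x | ((x \in C) && (x 0 i != 0)%R) && (wt x == 9)]| * 'C(36 - 9, nu) +
      #|[set x | ((x \in C) && (x 0 i != 0)%R) && (wt x == 12)]| * 'C(36 - 12, nu) +
      #|[set x | ((x \in C) && (x 0 i != 0)%R) && (wt x == 15)]| * 'C(36 - 15, nu) +
      #|[set x | ((x \in C) && (x 0 i != 0)%R) && (wt x == 18)]| * 'C(36 - 18, nu) +
      #|[set x | ((x \in C) && (x 0 i != 0)%R) && (wt x == 21)]| * 'C(36 - 21, nu) +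
      #|[set x | ((x \in C) && (x 0 i != 0)%R) && (wt x == 24)]| * 'C(36 - 24, nu) +
      #|[set x | ((x \in C) && (x 0 i != 0)%R) && (wt x == 27)]| * 'C(36 - 27, nu) +
      #|[set x | ((x \in C) && (x 0 i != 0)%R) && (wt x == 30)]| * 'C(36 - 30, nu) +
      #|[set x | ((x \in C) && (x 0 i != 0)%R) && (wt x == 33)]| * 'C(36 - 33, nu) +
      #|[set x | ((x \in C) && (x 0 i != 0)%R) && (wt x == 36)]| * 'C(36 - 36, nu)) +
     ( #|[set x | ((x \in C) && (x 0 i == 0)%R) && (wt x == 0)]| * 'C(35 - 0, nu) +
      #|[set x | ((x \in C) && (x 0 i == 0)%R) && (wt x == 9)]| * 'C(35 - 9, nu) +
      #|[set x | ((x \in C) && (x 0 i == 0)%R) && (wt x == 12)]| * 'C(35 - 12, nu) +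
      #|[set x | ((x \in C) && (x 0 i == 0)%R) && (wt x == 15)]| * 'C(35 - 15, nu) +
      #|[set x | ((x \in C) && (x 0 i == 0)%R) && (wt x == 18)]| * 'C(35 - 18, nu) +
      #|[set x | ((x \in C) && (x 0 i == 0)%R) && (wt x == 21)]| * 'C(35 - 21, nu) +
      #|[set x | ((x \in C) && (x 0 i == 0)%R) && (wt x == 24)]| * 'C(35 - 24, nu) +
      #|[set x | ((x \in C) && (x 0 i == 0)%R) && (wt x == 27)]| * 'C(35 - 27, nu) +
      #|[set x | ((x \in C) && (x 0 i == 0)%R) && (wt x == 30)]| * 'C(35 - 30, nu) +
      #|[set x | ((x \in C) && (x 0 i == 0)%R) && (wt x == 33)]| * 'C(35 - 33, nu) +
      #|[set x | ((x \in C) && (x 0 i == 0)%R) && (wt x == 36)]| * 'C(35 - 36, nu))) * 3 ^ nu = 3 ^ m * 'C(35, nu))%N.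
Proof.
move=> hm hnu; have := loc_gen hC i nu hm.
rewrite rhs_small // cardsC1 card_ord /=.
by [].
Qed.

Lemma loc9 (C : ternary_code 36) (hC : near_extremal36 C) i m : m = 18%N ->
  ((( #|[set x | ((x \in C) && (x 0 i != 0)%R) && (wt x == 0)]| * 'C(36 - 0, 9) +
      #|[set x | ((x \in C) && (x 0 i != 0)%R) && (wt x == 9)]| * 'C(36 - 9, 9) +
      #|[set x | ((x \in C) && (x 0 i != 0)%R) && (wt x == 12)]| * 'C(36 - 12, 9) +
      #|[set x | ((x \in C) && (x 0 i != 0)%R) && (wt x == 15)]| * 'C(36 - 15, 9) +
      #|[set x | ((x \in C) && (x 0 i != 0)%R) && (wt x == 18)]| * 'C(36 - 18, 9) +
      #|[set x | ((x \in C) && (x 0 i != 0)%R) && (wt x == 21)]| * 'C(36 - 21, 9) +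
      #|[set x | ((x \in C) && (x 0 i != 0)%R) && (wt x == 24)]| * 'C(36 - 24, 9) +
      #|[set x | ((x \in C) && (x 0 i != 0)%R) && (wt x == 27)]| * 'C(36 - 27, 9) +
      #|[set x | ((x \in C) && (x 0 i != 0)%R) && (wt x == 30)]| * 'C(36 - 30, 9) +
      #|[set x | ((x \in C) && (x 0 i != 0)%R) && (wt x == 33)]| * 'C(36 - 33, 9) +
      #|[set x | ((x \in C) && (x 0 i != 0)%R) && (wt x == 36)]| * 'C(36 - 36, 9)) +
     ( #|[set x | ((x \in C) && (x 0 i == 0)%R) && (wt x == 0)]| * 'C(35 - 0, 9) +
      #|[set x | ((x \in C) && (x 0 i == 0)%R) && (wt x == 9)]| * 'C(35 - 9, 9) +
      #|[set x | ((x \in C) && (x 0 i == 0)%R) && (wt x == 12)]| * 'C(35 - 12, 9) +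
      #|[set x | ((x \in C) && (x 0 i == 0)%R) && (wt x == 15)]| * 'C(35 - 15, 9) +
      #|[set x | ((x \in C) && (x 0 i == 0)%R) && (wt x == 18)]| * 'C(35 - 18, 9) +
      #|[set x | ((x \in C) && (x 0 i == 0)%R) && (wt x == 21)]| * 'C(35 - 21, 9) +
      #|[set x | ((x \in C) && (x 0 i == 0)%R) && (wt x == 24)]| * 'C(35 - 24, 9) +
      #|[set x | ((x \in C) && (x 0 i == 0)%R) && (wt x == 27)]| * 'C(35 - 27, 9) +
      #|[set x | ((x \in C) && (x 0 i == 0)%R) && (wt x == 30)]| * 'C(35 - 30, 9) +
      #|[set x | ((x \in C) && (x 0 i == 0)%R) && (wt x == 33)]| * 'C(35 - 33, 9) +
      #|[set x | ((x \in C) && (x 0 i == 0)%R) && (wt x == 36)]| * 'C(35 - 36, 9))) * 3 ^ 9 = 3 ^ m * ('C(35, 9) + #|[set x | ((x \in C) && (x 0 i == 0)%R) && (wt x == 9)]|))%N.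
Proof.
move=> hm; have := loc_gen hC i 9 hm.
rewrite (rhs9 hC).
by [].
Qed.

Local Close Scope ring_scope.

Theorem fact4p3 (C : ternary_code 36) :
  near_extremal36 C ->
  exists beta : nat, num_weight C 9 = (8 * beta)%N /\ (1 <= beta <= 111)%N.
Proof.
move=> hC.
have [m hm] : exists m, m = 18%N by exists 18%N.
have [e1 e2] := ZA.arith_nat _ _ _ _ _ _ _ _ _ _ _ _ _ _ _ _ _ _ _ _ _ _ _ _ _ _ _ _ _ _ _ _ _ _ hm
  (@glob_eq C hC 0 m hm isT) (@glob_eq C hC 1 m hm isT) (@glob_eq C hC 2 m hm isT) (@glob_eq C hC 3 m hm isT) (@glob_eq C hC 4 m hm isT) (@glob_eq C hC 5 m hm isT) (@glob_eq C hC 6 m hm isT) (@glob_eq C hC 7 m hm isT) (@glob_eq C hC 8 m hm isT) (@loc8 C hC ord0 1 m hm isT) (@loc8 C hC ord0 2 m hm isT) (@loc8 C hC ord0 3 m hm isT) (@loc8 C hC ord0 4 m hm isT) (@loc8 C hC ord0 5 m hm isT) (@loc8 C hC ord0 6 m hm isT) (@loc8 C hC ord0 7 m hm isT) (@loc8 C hC ord0 8 m hm isT) (@loc9 C hC ord0 m hm) (@splitBZ C ord0 9) (@splitBZ C ord0 12) (@splitBZ C ord0 15) (@splitBZ C ord0 18) (@splitBZ C ord0 21) (@splitBZ C ord0 24) (@splitBZ C ord0 27) (@splitBZ C ord0 30) (@splitBZ C ord0 33) (@splitBZ C ord0 36) (@A0_eq C) (@B0_eq C ord0) (@Z0_eq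 C ord0).
have [p hp] := @B9_even C ord0.
have hpos := A9_pos hC.
exists p; split; first by rewrite e1 hp; lia.
apply/andP; split; lia.
Qed.
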